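(* Let $(\Sigma_+,\Sigma_-,N_1,N_2,N_3)$ be a solution of the Wainwright–Hsu system satisfying the constraint, with $N_1=0$, $N_2,N_3>0$, and $\Sigma_-^2+(N_2-N_3)^2>0$. Then there is $n_0\in(0,\infty)$ such that $\lim_{\tau\to\infty}N_2(\tau)=\lim_{\tau\to\infty}N_3(\tau)=n_0$.
   Context: Wainwright–Hsu system: for functions $N_1,N_2,N_3,\Sigma_+,\Sigma_-$ of $\tau\in\mathbb{R}$ (prime denotes $d/d\tau$), $N_1'=(q-4\Sigma_+)N_1$, $N_2'=(q+2\Sigma_++2\sqrt3\Sigma_-)N_2$, $N_3'=(q+2\Sigma_+-2\sqrt3\Sigma_-)N_3$, $\Sigma_+'=-(2-q)\Sigma_+-3S_+$, $\Sigma_-'=-(2-q)\Sigma_--3S_-$, where $q=2(\Sigma_+^2+\Sigma_-^2)$, $S_+=\frac12[(N_2-N_3)^2-N_1(2N_1-N_2-N_3)]$, $S_-=\frac{\sqrt3}{2}(N_3-N_2)(N_1-N_2-N_3)$, together with the constraint $\Sigma_+^2+\Sigma_-^2+\frac34[N_1^2+N_2^2+N_3^2-2(N_1N_2+N_2N_3+N_1N_3)]=1$. Solutions exist for all $\tau\in\mathbb{R}$; the condition $\Sigma_-^2+(N_2-N_3)^2>0$ is preserved by the flow. *)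

(* Defs.v *)
From Stdlib Require Import Reals.
From Coquelicot Require Import Coquelicot.
Open Scope R_scope.

Definition WH_q (Sp Sm : R) : R := 2 * (Sp ^ 2 + Sm ^ 2).

Definition WH_Splus (N1 N2 N3 : R) : R :=
  / 2 * ((N2 - N3) ^ 2 - N1 * (2 * N1 - N2 - N3)).

Definition WH_Sminus (N1 N2 N3 : R) : R :=
  sqrt 3 / 2 * (N3 - N2) * (N1 - N2 - N3).

Definition WH_solution (N1 N2 N3 Sp Sm : R -> R) : Prop :=
  forall t : R,
    is_derive N1 t ((WH_q (Sp t) (Sm t) - 4 * Sp t) * N1 t) /\
    is_derive N2 t ((WH_q (Sp t) (Sm t) + 2 * Sp t + 2 * sqrt 3 * Sm t) * N2 t) /\
    is_derive N3 t ((WH_q (Sp t) (Sm t) + 2 * Sp t - 2 * sqrt 3 * Sm t) * N3 t) /\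
    is_derive Sp t (- (2 - WH_q (Sp t) (Sm t)) * Sp t
                    - 3 * WH_Splus (N1 t) (N2 t) (N3 t)) /\
    is_derive Sm t (- (2 - WH_q (Sp t) (Sm t)) * Sm t
                    - 3 * WH_Sminus (N1 t) (N2 t) (N3 t)).

Definition WH_constraint (N1 N2 N3 Sp Sm : R -> R) : Prop :=
  forall t : R,
    Sp t ^ 2 + Sm t ^ 2
    + 3 / 4 * (N1 t ^ 2 + N2 t ^ 2 + N3 t ^ 2
               - 2 * (N1 t * N2 t + N2 t * N3 t + N1 t * N3 t)) = 1.

(* Main.v *)
Require Import Defs.
From Stdlib Require Import Reals Lra Psatz Classical.
From Coquelicot Require Import Coquelicot.
Open Scope R_scope.

Lemma incr_of_deriv (f d : R -> R) a :
  (forall t, a <= t -> is_derive f t (d t)) -> (forall t, a <= t -> 0 <= d t) ->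
  forall u v, a <= u -> u <= v -> f u <= f v.
Proof.
  intros Hd Hp u v Hu Huv.
  destruct (Req_dec u v) as [->|Hne]; [lra|].
  destruct (MVT_cor2 f d u v) as [c [Hc Hc2]]; [lra| |].
  - intros c Hc. apply is_derive_Reals. apply Hd. lra.
  - assert (0 <= d c * (v - u)) by (apply Rmult_le_pos; [apply Hp; lra | lra]). lra.
Qed.

Lemma mono_lim (f : R -> R) a B :
  (forall u v, a <= u -> u <= v -> f u <= f v) -> (forall t, a <= t -> f t <= B) ->
  exists l : R, is_lim f p_infty l.
Proof.
  intros Hm HB.
  set (E := fun z => exists t, a <= t /\ z = f t).
  destruct (completeness E) as [l [Hub Hlub]].
  - exists B. intros z [t [Ht ->]]. apply HB; auto.
  - exists (f a). exists a. split; lra.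
  - exists l. apply is_lim_spec. intros eps. simpl.
    assert (exists t, a <= t /\ l - eps < f t) as [t1 [Ht1 Hf1]].
    { apply NNPP. intro Hn. assert (l <= l - eps).
      { apply Hlub. intros z [t [Ht ->]]. apply Rnot_lt_le. intro Hlt. apply Hn. exists t. split; auto. }
      destruct eps; simpl in *; lra. }
    exists (Rmax a t1). intros t Ht.
    assert (f t1 <= f t) by (apply Hm; [lra | pose proof (Rmax_r a t1); lra]).
    assert (f t <= l) by (apply Hub; exists t; split; [pose proof (Rmax_l a t1); lra | auto]).
    apply Rabs_lt_between'. destruct eps; simpl in *; lra.
Qed.

Lemma sq_to0 (g : R -> R) T K k :
  0 < K -> 0 < k -> (forall t, T <= t -> g t ^ 2 <= K / (1 + k * (t - T))) ->
  is_lim g p_infty 0.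
Proof.
  intros HK Hk Hg. apply is_lim_spec. intro eps. simpl.
  destruct eps as [e He]; simpl.
  exists (T + K / (k * (e * e))). intros t Ht.
  assert (Hq : 0 < K / (k * (e*e))) by (apply Rdiv_lt_0_compat; [lra| apply Rmult_lt_0_compat; [lra | apply Rmult_lt_0_compat; lra]]).
  assert (H1 : K / (k * (e*e)) < t - T) by lra.
  assert (H2 : K < k * (e*e) * (t - T)).
  { assert (Hke : 0 < k * (e*e)) by (apply Rmult_lt_0_compat; [lra | apply Rmult_lt_0_compat; lra]).
    apply (Rmult_lt_compat_l (k * (e*e))) in H1; [|exact Hke].
    replace (k * (e * e) * (K / (k * (e * e)))) with K in H1 by (field; split; lra). lra. }
  assert (H3 : K / (1 + k * (t - T)) < e * e).
  { apply Rlt_div_l; nra. }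
  specialize (Hg t ltac:(lra)).
  rewrite Rminus_0_r. apply Rabs_lt_between. split; nra.
Qed.

Lemma der_plus (f g : R->R) t df dg : is_derive f t df -> is_derive g t dg -> is_derive (fun t => f t + g t) t (df + dg).
Proof. intros. apply (is_derive_plus f g); auto. Qed.

Lemma der_lin (f : R -> R) t d c : is_derive f t d -> is_derive (fun t => f t - c * t) t (d - c).
Proof.
  intros H. apply (is_derive_ext (K:=R_AbsRing) (V:=R_NormedModule) (fun t => f t + (- c * t))).
  { intros t0. change (f t0 + - c * t0 = f t0 - c * t0). ring. }
  replace (d - c) with (d + (- c)) by ring. apply der_plus; auto.
  auto_derive; auto; ring.
Qed.

Lemma exp_mono a b : a <= b -> exp a <= exp b.
Proof. intros. destruct (Req_dec a b) as [->|]; [lra|]. apply Rlt_le, exp_increasing; lra. Qed.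

Section WH.
Variables N2 N3 Sp Sm : R -> R.
Hypothesis HN2 : forall t, is_derive N2 t ((2*(1+Sp t) - 3/2*(N2 t - N3 t)^2 + 2*sqrt 3*Sm t) * N2 t).
Hypothesis HN3 : forall t, is_derive N3 t ((2*(1+Sp t) - 3/2*(N2 t - N3 t)^2 - 2*sqrt 3*Sm t) * N3 t).
Hypothesis HSp : forall t, is_derive Sp t (-(3/2)*(N2 t - N3 t)^2*(1+Sp t)).
Hypothesis HSm : forall t, is_derive Sm t (-(3/2)*(N2 t - N3 t)^2*Sm t - 3*sqrt 3/2*(N2 t - N3 t)*(N2 t + N3 t)).
Hypothesis HC : forall t, Sm t ^ 2 + 3/4*(N2 t - N3 t)^2 - 2*(1+Sp t) + (1+Sp t)^2 = 0.
Hypothesis P2 : forall t, 0 < N2 t.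
Hypothesis P3 : forall t, 0 < N3 t.

Lemma r3pos : 0 < sqrt 3. Proof. apply sqrt_lt_R0; lra. Qed.
Lemma r3sq : sqrt 3 * sqrt 3 = 3. Proof. apply sqrt_sqrt; lra. Qed.

Lemma DN2 t : Derive (fun x => N2 x) t = (2*(1+Sp t) - 3/2*(N2 t - N3 t)^2 + 2*sqrt 3*Sm t) * N2 t.
Proof. apply is_derive_unique, HN2. Qed.
Lemma DN3 t : Derive (fun x => N3 x) t = (2*(1+Sp t) - 3/2*(N2 t - N3 t)^2 - 2*sqrt 3*Sm t) * N3 t.
Proof. apply is_derive_unique, HN3. Qed.
Lemma DSp t : Derive (fun x => Sp x) t = -(3/2)*(N2 t - N3 t)^2*(1+Sp t).
Proof. apply is_derive_unique, HSp. Qed.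
Lemma DSm t : Derive (fun x => Sm x) t = -(3/2)*(N2 t - N3 t)^2*Sm t - 3*sqrt 3/2*(N2 t - N3 t)*(N2 t + N3 t).
Proof. apply is_derive_unique, HSm. Qed.

Ltac dside := repeat apply conj;
  try exact I;
  repeat match goal with
  | |- ex_derive (fun x => N2 x) ?t => exists (((2*(1+Sp t) - 3/2*(N2 t - N3 t)^2 + 2*sqrt 3*Sm t) * N2 t)); exact (HN2 t)
  | |- ex_derive (fun x => N3 x) ?t => exists (((2*(1+Sp t) - 3/2*(N2 t - N3 t)^2 - 2*sqrt 3*Sm t) * N3 t)); exact (HN3 t)
  | |- ex_derive (fun x => Sp x) ?t => eexists; exact (HSp t)
  | |- ex_derive (fun x => Sm x) ?t => eexists; exact (HSm t)
  end;
  try (apply Rmult_lt_0_compat; assumption);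
  try (apply Rgt_not_eq; apply Rplus_lt_0_compat; assumption);
  try (apply Rgt_not_eq; assumption);
  try assumption.
Ltac drw := rewrite ?DN2, ?DN3, ?DSp, ?DSm.

Definition xx t := 1 + Sp t.
Definition ww t := N2 t - N3 t.
Definition ss t := N2 t + N3 t.
Definition nn t := N2 t * N3 t.
Definition yy t := Sm t * (N2 t - N3 t) / (N2 t + N3 t).
Definition Phi t := ln (N2 t * N3 t) - Sm t * (N2 t - N3 t) / (N2 t + N3 t) / sqrt 3.
Definition Om t := / (1 + Sp t) + Sm t * (N2 t - N3 t) / (N2 t + N3 t) / (2 * sqrt 3 * (1 + Sp t)).
Definition Lf t := ln (N2 t * N3 t) - 2 * ln (1 + Sp t).
Definition Xe t := (1 + Sp t) * exp (8 * t).

Lemma D_Phi t : is_derive Phi t (2*xx t^2 + 2*yy t^2 + 3/(2*sqrt 3) * ww t^2 * yy t).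
Proof.
  pose proof (P2 t); pose proof (P3 t); pose proof r3pos. unfold Phi, xx, yy, ww.
  auto_derive.
  - dside.
  - drw.
    pose proof (HC t).
    replace (2 * (1 + Sp t) ^ 2) with (2 * (1 + Sp t) ^ 2 - 2 * (Sm t ^ 2 + 3/4*(N2 t - N3 t)^2 - 2*(1+Sp t) + (1+Sp t)^2)) by (rewrite H2; ring).
    field. lra.
Qed.

Lemma D_Om t : 0 < 1 + Sp t -> is_derive Om t (2 - xx t - yy t ^2 / xx t).
Proof.
  intro Hx.
  pose proof (P2 t); pose proof (P3 t); pose proof r3pos. unfold Om, xx, yy, ww.
  auto_derive.
  - dside. apply Rgt_not_eq. apply Rmult_lt_0_compat; lra.
  - drw.
    pose proof (HC t).
    replace (2 - (1 + Sp t)) with (2 - (1 + Sp t) + / (1 + Sp t) * (Sm t ^ 2 + 3/4*(N2 t - N3 t)^2 - 2*(1+Sp t) + (1+Sp t)^2)) by (rewrite H2; ring).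
    field. lra.
Qed.

Lemma D_Lf t : 0 < 1 + Sp t -> is_derive Lf t (4 * xx t).
Proof.
  intro Hx.
  pose proof (P2 t); pose proof (P3 t). unfold Lf, xx.
  auto_derive.
  - dside.
  - drw. field. lra.
Qed.

Lemma D_Xe t : is_derive Xe t (exp (8*t) * xx t * (8 - 3/2 * ww t ^2)).
Proof.
  unfold Xe, xx, ww.
  auto_derive.
  - dside.
  - drw. ring.
Qed.

Lemma D_x t : is_derive (fun t => 1 + Sp t) t (-(3/2) * ww t^2 * xx t).
Proof.
  unfold xx, ww. auto_derive. - dside. - drw. ring.
Qed.

Lemma x_bounds t : 0 <= xx t <= 2.
Proof. pose proof (HC t). pose proof (pow2_ge_0 (Sm t)). pose proof (pow2_ge_0 (N2 t - N3 t)). unfold xx. split; nra. Qed.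
Lemma Sm_bound t : Sm t ^2 <= 2*xx t - xx t^2.
Proof. pose proof (HC t). pose proof (pow2_ge_0 (N2 t - N3 t)). unfold xx. nra. Qed.
Lemma w_bound t : ww t ^2 <= 8/3 * xx t.
Proof. pose proof (HC t). pose proof (x_bounds t). pose proof (pow2_ge_0 (Sm t)). unfold xx, ww in *. nra. Qed.
Lemma y_le_Sm t : yy t ^2 <= Sm t ^2.
Proof.
  pose proof (P2 t); pose proof (P3 t). unfold yy.
  assert (Hs: 0 < N2 t + N3 t) by lra.
  replace ((Sm t * (N2 t - N3 t) / (N2 t + N3 t))^2) with (Sm t ^2 * ((N2 t - N3 t)^2 / (N2 t + N3 t)^2)) by (field; lra).
  assert ((N2 t - N3 t)^2 / (N2 t + N3 t)^2 <= 1).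
  { assert (0 < N2 t * N3 t) by (apply Rmult_lt_0_compat; lra).
    apply (proj1 (Rdiv_le_1 ((N2 t - N3 t)^2) ((N2 t + N3 t)^2) ltac:(apply pow_lt; lra))). assert ((N2 t + N3 t)^2 - (N2 t - N3 t)^2 = 4*(N2 t*N3 t)) by ring. lra. }
  pose proof (pow2_ge_0 (Sm t)). nra.
Qed.
Lemma Smw_bound t : Sm t ^2 * ww t ^2 <= 4/3 * xx t ^2.
Proof.
  pose proof (HC t). pose proof (x_bounds t). unfold xx, ww in *.
  assert (Sm t ^2 * (3/4 * (N2 t - N3 t)^2) <= ((Sm t ^ 2 + 3/4*(N2 t - N3 t)^2)/2)^2) by (pose proof (pow2_ge_0 (Sm t ^2 - 3/4 * (N2 t - N3 t)^2)); nra).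
  assert ((Sm t ^ 2 + 3/4*(N2 t - N3 t)^2) = (1 + Sp t) * (2 - (1 + Sp t))) by nra.
  assert (((1 + Sp t) * (2 - (1 + Sp t)))^2 <= 4 * (1 + Sp t)^2).
  { assert (Hq: (2 - (1 + Sp t))^2 <= 4) by nra. pose proof (pow2_ge_0 (1 + Sp t)).
    replace (((1 + Sp t) * (2 - (1 + Sp t)))^2) with ((1 + Sp t)^2 * (2 - (1 + Sp t))^2) by ring. nra. }
  rewrite H2 in H1. lra.
Qed.
Lemma y_bound t : yy t ^2 <= xx t^2 / (3 * nn t).
Proof.
  pose proof (P2 t); pose proof (P3 t). pose proof (Smw_bound t). unfold yy, nn, ww in *.
  assert (Hs: 0 < N2 t + N3 t) by lra.
  replace ((Sm t * (N2 t - N3 t) / (N2 t + N3 t))^2) with (Sm t ^2 * (N2 t - N3 t)^2 / (N2 t + N3 t)^2) by (field; lra).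
  assert (Hn : 0 < N2 t * N3 t) by (apply Rmult_lt_0_compat; lra).
  apply Rle_trans with (4/3 * xx t ^2 / (N2 t + N3 t)^2).
  { apply Rmult_le_compat_r; [| exact H1]. apply Rlt_le, Rinv_0_lt_compat. apply pow_lt; lra. }
  assert (4 * (N2 t * N3 t) <= (N2 t + N3 t)^2) by (pose proof (pow2_ge_0 (N2 t - N3 t)); nra).
  pose proof (pow2_ge_0 (xx t)).
  replace (4/3 * xx t ^2 / (N2 t + N3 t)^2) with (xx t ^2 * (4/3 * / (N2 t + N3 t)^2)) by (field; lra).
  replace (xx t ^2 / (3 * (N2 t * N3 t))) with (xx t ^2 * (4/3 * / (4 * (N2 t * N3 t)))) by (field; lra).
  apply Rmult_le_compat_l; [lra|]. apply Rmult_le_compat_l; [lra|].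
  apply Rinv_le_contravar; lra.
Qed.

Lemma b_eq : 3/(2*sqrt 3) = sqrt 3 / 2.
Proof. pose proof r3sq; pose proof r3pos. field_simplify; [|lra]. rewrite <- H at 1. field. lra. Qed.

Lemma Phi_d_nonneg t : 0 <= 2*xx t^2 + 2*yy t^2 + 3/(2*sqrt 3) * ww t^2 * yy t.
Proof.
  rewrite b_eq. pose proof r3sq. pose proof (w_bound t). pose proof (x_bounds t).
  set (b := sqrt 3 / 2 * ww t ^2).
  assert (Hb : b^2 = 3/4 * (ww t^2)^2) by (unfold b; replace 3 with (sqrt 3 * sqrt 3) at 2 by exact H; field).
  assert (0 <= ww t ^2) by nra.
  assert (b^2 <= 3/4 * (8/3 * xx t)^2) by nra.
  replace (sqrt 3 / 2 * ww t ^ 2 * yy t) with (b * yy t) by (unfold b; ring).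
  nra.
Qed.

Lemma Phi_d_upper t : 2*xx t^2 + 2*yy t^2 + 3/(2*sqrt 3) * ww t^2 * yy t <= 14/3 * xx t^2 + 5/2 * yy t^2.
Proof.
  rewrite b_eq. pose proof r3sq. pose proof (w_bound t). pose proof (x_bounds t).
  set (b := sqrt 3 / 2 * ww t ^2).
  assert (Hb : b^2 = 3/4 * (ww t^2)^2) by (unfold b; replace 3 with (sqrt 3 * sqrt 3) at 2 by exact H; field).
  assert (0 <= ww t ^2) by nra.
  assert (b^2 <= 3/4 * (8/3 * xx t)^2) by nra.
  replace (sqrt 3 / 2 * ww t ^ 2 * yy t) with (b * yy t) by (unfold b; ring).
  pose proof (pow2_ge_0 (b - yy t)). nra.
Qed.
Lemma x_dec u v : u <= v -> xx v <= xx u.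
Proof.
  intros Huv. assert (- xx u <= - xx v); [|lra].
  apply (incr_of_deriv (fun t => - xx t) (fun t => 3/2 * ww t^2 * xx t) u); try lra.
  - intros t _. unfold xx, ww. auto_derive; [dside | drw; ring].
  - intros t _. pose proof (x_bounds t). pose proof (pow2_ge_0 (ww t)).
    apply Rmult_le_pos; [|lra]. apply Rmult_le_pos; lra.
Qed.

Lemma x_pos t0 t : 0 < xx t0 -> t0 <= t -> 0 < xx t.
Proof.
  intros H0 Ht.
  assert (Xe t0 <= Xe t).
  { apply (incr_of_deriv Xe (fun t => exp (8*t) * xx t * (8 - 3/2 * ww t^2)) t0); try lra.
    - intros; apply D_Xe.
    - intros s _. pose proof (x_bounds s). pose proof (w_bound s). pose proof (exp_pos (8*s)).
      apply Rmult_le_pos; [apply Rmult_le_pos|]; lra. }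
  unfold Xe, xx in *. pose proof (exp_pos (8*t0)). pose proof (exp_pos (8*t)).
  assert (0 < (1 + Sp t0) * exp (8 * t0)) by (apply Rmult_lt_0_compat; lra).
  destruct (Rle_lt_dec (1 + Sp t) 0); [|lra].
  assert ((1 + Sp t) * exp (8 * t) <= 0) by (apply Rmult_le_0_r; lra). lra.
Qed.

Lemma Phi_inc u v : u <= v -> Phi u <= Phi v.
Proof.
  intros. apply (incr_of_deriv Phi (fun t => 2*xx t^2 + 2*yy t^2 + 3/(2*sqrt 3) * ww t^2 * yy t) u); try lra.
  - intros; apply D_Phi.
  - intros; apply Phi_d_nonneg.
Qed.

Lemma lnE t : ln (nn t) = Phi t + yy t / sqrt 3.
Proof. unfold Phi, nn, yy. ring. Qed.

Lemma y_sq1 t : yy t ^2 <= 2 * xx t.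
Proof. pose proof (y_le_Sm t). pose proof (Sm_bound t). pose proof (pow2_ge_0 (xx t)). lra. Qed.

Lemma ybd t : -1 <= yy t / sqrt 3 <= 1.
Proof.
  pose proof (y_le_Sm t). pose proof (Sm_bound t). pose proof (x_bounds t).
  assert (Hy1 : yy t ^2 <= 1) by (pose proof (pow2_ge_0 (xx t - 1)); nra).
  assert (Hy : -1 <= yy t <= 1) by (split; [pose proof (pow2_ge_0 (yy t + 1)) | pose proof (pow2_ge_0 (yy t - 1))]; nra).
  assert (Hr : 1 <= sqrt 3) by (rewrite <- sqrt_1; apply sqrt_le_1_alt; lra).
  assert (Hi : 0 < / sqrt 3 <= 1).
  { split. apply Rinv_0_lt_compat; lra. rewrite <- Rinv_1. apply Rinv_le_contravar; lra. }
  unfold Rdiv. split; nra.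
Qed.

Lemma nn_pos t : 0 < nn t.
Proof. unfold nn. apply Rmult_lt_0_compat; auto. Qed.

Lemma n_low t0 t : t0 <= t -> exp (Phi t0 - 1) <= nn t.
Proof.
  intros Ht. rewrite <- (exp_ln (nn t)) by apply nn_pos. apply exp_mono.
  rewrite lnE. pose proof (Phi_inc t0 t Ht). pose proof (ybd t). lra.
Qed.

Lemma Om_d_low t kap : 0 < xx t -> xx t / (3 * nn t) <= kap -> 2 - xx t - kap <= 2 - xx t - yy t ^2 / xx t.
Proof.
  intros Hx Hk. pose proof (y_bound t). pose proof (nn_pos t).
  assert (yy t ^2 / xx t <= xx t / (3 * nn t)).
  { apply Rle_div_l; [lra|].
    replace (xx t / (3 * nn t) * xx t) with (xx t ^2 / (3 * nn t)) by (field; lra). exact H. }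
  lra.
Qed.

Lemma Om_up t nmin : 0 < nmin -> 0 < xx t -> nmin <= nn t -> Om t <= / xx t + (/ (36 * nmin) + 1).
Proof.
  intros Hm Hx Hn. pose proof (y_bound t). pose proof (nn_pos t). pose proof r3sq. pose proof r3pos.
  set (z := yy t / (2 * sqrt 3 * xx t)).
  assert (HO : Om t = / xx t + z) by (unfold Om, z, yy, xx; reflexivity).
  assert (Hz : z^2 = yy t ^2 / (12 * xx t ^2)).
  { unfold z. replace 12 with (4 * (sqrt 3 * sqrt 3)) by (rewrite H1; ring). field. lra. }
  assert (Hz2 : yy t ^2 / (12 * xx t ^2) <= / (36 * nn t)).
  { apply Rle_div_l; [nra|].
    replace (/ (36 * nn t) * (12 * xx t ^ 2)) with (xx t ^2 / (3 * nn t)) by (field; lra). exact H. }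
  assert (Hz3 : / (36 * nn t) <= / (36 * nmin)) by (apply Rinv_le_contravar; lra).
  assert (z <= z^2 + 1) by (pose proof (pow2_ge_0 (z - 1/2)); nra).
  lra.
Qed.

Theorem sec_main t0 : Sm t0 ^ 2 + (N2 t0 - N3 t0)^2 > 0 ->
  exists n0, 0 < n0 /\ is_lim N2 p_infty n0 /\ is_lim N3 p_infty n0.
Proof.
  intro H0.
  set (x0 := xx t0).
  assert (Hx0 : 0 < x0 < 2).
  { pose proof (HC t0). pose proof (x_bounds t0). unfold x0, xx in *.
    pose proof (pow2_ge_0 (Sm t0)). pose proof (pow2_ge_0 (N2 t0 - N3 t0)).
    assert (0 < (1 + Sp t0) * (2 - (1 + Sp t0))) by nra.
    split; nra. }
  assert (Xpos : forall t, t0 <= t -> 0 < xx t) by (intros; apply (x_pos t0); auto; apply Hx0).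
  set (nmin := exp (Phi t0 - 1)).
  assert (Hnmin : 0 < nmin) by apply exp_pos.
  assert (nlow : forall t, t0 <= t -> nmin <= nn t) by (intros; apply n_low; auto).
  set (kap := (2 - x0)/2).
  assert (Hkap : 0 < kap) by (unfold kap; lra).
  assert (HT : exists T, t0 <= T /\ forall t, T <= t -> xx t / (3 * nn t) <= kap).
  { destruct (classic (exists T, t0 <= T /\ xx T <= 3*nmin*kap)) as [[T [HT1 HT2]] | Hno].
    - exists T. split; auto. intros t Ht.
      pose proof (x_dec T t Ht). pose proof (nlow t ltac:(lra)). pose proof (Xpos t ltac:(lra)).
      pose proof (nn_pos t).
      apply Rle_div_l; [lra|].
      assert (kap * (nn t - nmin) >= 0) by (apply Rle_ge, Rmult_le_pos; lra). lra.
    - set (eps := 3*nmin*kap).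
      assert (Heps: 0 < eps) by (unfold eps; apply Rmult_lt_0_compat; lra).
      assert (Hgt : forall t, t0 <= t -> eps < xx t).
      { intros t Ht; apply Rnot_le_lt; intro; apply Hno; exists t; auto. }
      assert (Lg : forall t, t0 <= t -> Lf t0 + 4*eps*(t - t0) <= Lf t).
      { intros t Ht. assert (Lf t0 - 4*eps*t0 <= Lf t - 4*eps*t); [|lra].
        apply (incr_of_deriv (fun t => Lf t - (4*eps) * t) (fun t => 4 * xx t - 4*eps) t0); try lra.
        - intros s Hs. apply der_lin. apply D_Lf. apply Xpos; auto.
        - intros s Hs. pose proof (Hgt s Hs). lra. }
      set (M := ln (/ (eps * kap))).
      set (Tm := t0 + Rabs (M - Lf t0) / (4*eps)).
      exists (Rmax t0 Tm). split; [apply Rmax_l|]. intros t Ht.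
      pose proof (Rmax_l t0 Tm). pose proof (Rmax_r t0 Tm).
      assert (Ht0: t0 <= t) by lra.
      assert (HLM : M <= Lf t).
      { pose proof (Lg t Ht0). pose proof (Rle_abs (M - Lf t0)).
        assert (E4 : 4*eps*(Rabs (M - Lf t0)/(4*eps)) = Rabs(M - Lf t0)) by (field; lra).
        assert (4*eps*(t - t0) >= 4*eps*(Rabs (M - Lf t0)/(4*eps))).
        { apply Rle_ge, Rmult_le_compat_l; [lra|]. unfold Tm in *. lra. }
        lra. }
      pose proof (Xpos t Ht0) as Hxt. pose proof (nn_pos t).
      assert (Hek : 0 < eps * kap) by (apply Rmult_lt_0_compat; lra).
      assert (Hn : xx t * xx t * / (eps * kap) <= nn t).
      { rewrite <- (exp_ln (nn t)) by apply nn_pos.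
        replace (xx t * xx t * / (eps*kap)) with (exp (M + 2 * ln (xx t))).
        - apply exp_mono. unfold Lf, nn, xx in *. lra.
        - unfold M. replace (2 * ln (xx t)) with (ln (xx t) + ln (xx t)) by ring.
          rewrite !exp_plus, !exp_ln; try ring; try lra; apply Rinv_0_lt_compat; lra. }
      assert (Hn2 : xx t * xx t <= nn t * (eps * kap)).
      { apply (Rmult_le_compat_r (eps * kap)) in Hn; [|lra].
        replace (xx t * xx t * / (eps * kap) * (eps * kap)) with (xx t * xx t) in Hn by (field; lra). exact Hn. }
      assert (Hxe : xx t * eps <= xx t * xx t) by (apply Rmult_le_compat_l; [lra | apply Rlt_le, Hgt; auto]).
      assert (Hxk : xx t <= nn t * kap).
      { apply (Rmult_le_reg_r eps); [lra|]. nra. }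
      apply Rle_div_l; [lra|]. assert (0 <= nn t * kap) by (apply Rmult_le_pos; lra). lra. }
  destruct HT as [T [HT0 HTk]].
  assert (Omg : forall t, T <= t -> Om T + kap * (t - T) <= Om t).
  { intros t Ht.
    assert (Om T - kap * T <= Om t - kap * t); [|lra].
    apply (incr_of_deriv (fun t => Om t - kap * t) (fun t => (2 - xx t - yy t ^2 / xx t) - kap) T); try lra.
    - intros s Hs. apply der_lin. apply D_Om. apply (Xpos s); lra.
    - intros s Hs. pose proof (Om_d_low s kap (Xpos s ltac:(lra)) (HTk s Hs)).
      pose proof (x_dec t0 s ltac:(lra)). fold x0 in H1. unfold kap in *. lra. }
  set (c := / (36 * nmin) + 1).
  set (T2 := T + Rabs (c - Om T + 1) / kap).
  assert (HT2 : T <= T2).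
  { unfold T2. pose proof (Rabs_pos (c - Om T + 1)). assert (0 <= Rabs (c - Om T + 1) / kap) by (apply Rdiv_le_0_compat; lra). lra. }
  assert (xb : forall t, T2 <= t -> xx t <= / (1 + kap * (t - T2))).
  { intros t Ht.
    pose proof (Omg t ltac:(lra)).
    pose proof (Om_up t nmin Hnmin (Xpos t ltac:(lra)) (nlow t ltac:(lra))). fold c in H1.
    assert (kap * (T2 - T) = Rabs (c - Om T + 1)) by (unfold T2; field; lra).
    pose proof (Rle_abs (c - Om T + 1)).
    assert (Hd : 1 + kap * (t - T2) <= / xx t) by nra.
    assert (0 < 1 + kap * (t - T2)) by nra.
    rewrite <- (Rinv_inv (xx t)). apply Rinv_le_contravar; auto. }

  set (Cc := 14/3 + 5/(6*nmin)).
  assert (HCc : 0 < Cc).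
  { unfold Cc. assert (0 < 5/(6*nmin)) by (apply Rdiv_lt_0_compat; lra). lra. }
  assert (Pd : forall t, T2 <= t -> 2*xx t^2 + 2*yy t^2 + 3/(2*sqrt 3) * ww t^2 * yy t <= Cc * / (1 + kap*(t - T2))^2).
  { intros t Ht. pose proof (Phi_d_upper t). pose proof (y_bound t) as Hyb. pose proof (nlow t ltac:(lra)).
    pose proof (xb t Ht). pose proof (Xpos t ltac:(lra)). pose proof (nn_pos t).
    assert (HD : 0 < 1 + kap*(t-T2)) by nra.
    assert (Hx2 : xx t ^2 <= / (1 + kap*(t - T2))^2).
    { rewrite Rinv_pow by lra. pose proof (Rinv_0_lt_compat _ HD). nra. }
    assert (Hy2 : yy t ^2 <= xx t ^2 * / (3 * nmin)).
    { eapply Rle_trans; [exact Hyb|]. unfold Rdiv. apply Rmult_le_compat_l; [apply pow2_ge_0|].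
      apply Rinv_le_contravar; lra. }
    assert (Cc * xx t ^2 <= Cc * / (1 + kap*(t - T2))^2) by (apply Rmult_le_compat_l; lra).
    assert (E : 14/3 * xx t^2 + 5/2 * (xx t ^2 * / (3 * nmin)) = Cc * xx t ^2) by (unfold Cc; field; lra).
    lra. }
  assert (Pb : forall t, T2 <= t -> Phi t <= Phi T2 + Cc / kap).
  { intros t Ht.
    assert (Hle : - (Phi T2 + Cc / kap * / (1 + kap * (T2 - T2))) <= - (Phi t + Cc / kap * / (1 + kap * (t - T2)))).
    { apply (incr_of_deriv (fun t => - (Phi t + Cc / kap * / (1 + kap * (t - T2))))
        (fun t => Cc * / (1 + kap*(t - T2))^2 - (2*xx t^2 + 2*yy t^2 + 3/(2*sqrt 3) * ww t^2 * yy t)) T2); try lra.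
      - intros s Hs.
        assert (HDs : 0 < 1 + kap * (s - T2)) by nra.
        assert (Hh : is_derive (fun t => Cc / kap * / (1 + kap * (t - T2))) s (- (Cc * / (1 + kap*(s - T2))^2))).
        { auto_derive; [lra | field; lra]. }
        pose proof (der_plus _ _ _ _ _ (D_Phi s) Hh) as Hg.
        replace (Cc * / (1 + kap * (s - T2)) ^ 2 - (2 * xx s ^ 2 + 2 * yy s ^ 2 + 3 / (2 * sqrt 3) * ww s ^ 2 * yy s))
          with (- ((2 * xx s ^ 2 + 2 * yy s ^ 2 + 3 / (2 * sqrt 3) * ww s ^ 2 * yy s) + - (Cc * / (1 + kap * (s - T2)) ^ 2))) by ring.
        apply (is_derive_opp (fun t => Phi t + Cc / kap * / (1 + kap * (t - T2)))). exact Hg.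
      - intros s Hs. pose proof (Pd s Hs). lra. }
    replace (1 + kap * (T2 - T2)) with 1 in Hle by ring. rewrite Rinv_1 in Hle.
    assert (HDt : 0 < 1 + kap * (t - T2)) by nra.
    assert (0 <= Cc / kap * / (1 + kap * (t - T2))).
    { apply Rmult_le_pos. apply Rlt_le, Rdiv_lt_0_compat; lra. apply Rlt_le, Rinv_0_lt_compat; lra. }
    lra. }
  destruct (mono_lim Phi T2 (Phi T2 + Cc/kap)) as [l Hl].
  { intros; apply Phi_inc; lra. }
  { exact Pb. }
  assert (Hy0 : is_lim (fun t => yy t / sqrt 3) p_infty 0).
  { apply (sq_to0 _ T2 2 kap); try lra. intros t Ht.
    pose proof (y_sq1 t). pose proof (xb t Ht). pose proof r3sq as Hr3. pose proof r3pos.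
    assert (E : (yy t / sqrt 3)^2 = yy t ^2 / 3).
    { replace 3 with (sqrt 3 * sqrt 3) at 2 by exact Hr3. field. lra. }
    rewrite E. pose proof (pow2_ge_0 (yy t)). unfold Rdiv in *. lra. }
  assert (Hw0 : is_lim ww p_infty 0).
  { apply (sq_to0 _ T2 (8/3) kap); try lra. intros t Ht. pose proof (w_bound t). pose proof (xb t Ht).
    unfold Rdiv. lra. }
  assert (Hln : is_lim (fun t => ln (nn t)) p_infty (l + 0)).
  { apply (is_lim_ext (fun t => Phi t + yy t / sqrt 3)). { intros; rewrite lnE; reflexivity. }
    apply is_lim_plus'; auto. }
  assert (Hn : is_lim nn p_infty (exp (l + 0))).
  { apply (is_lim_ext (fun t => exp (ln (nn t)))). { intros; apply exp_ln, nn_pos. }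
    apply (is_lim_comp_continuous (fun t => ln (nn t)) exp). exact Hln. apply continuous_exp. }
  assert (Hww : is_lim (fun t => ww t * ww t) p_infty (0 * 0)).
  { pose proof (is_lim_mult ww ww p_infty 0 0 Hw0 Hw0 I) as HH. simpl in HH. exact HH. }
  assert (H4n : is_lim (fun t => 4 * nn t) p_infty (4 * exp (l + 0))).
  { pose proof (is_lim_scal_l nn 4 p_infty _ Hn) as HH. simpl in HH. exact HH. }
  assert (Hin : is_lim (fun t => ww t * ww t + 4 * nn t) p_infty (0 * 0 + 4 * exp (l + 0))).
  { apply is_lim_plus'; auto. }
  assert (Hsq : is_lim (fun t => sqrt (ww t * ww t + 4 * nn t)) p_infty (sqrt (0 * 0 + 4 * exp (l + 0)))).
  { apply (is_lim_comp_continuous (fun t => ww t * ww t + 4 * nn t) sqrt). exact Hin. apply continuous_sqrt. }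
  assert (Hnum : is_lim (fun t => ww t + sqrt (ww t * ww t + 4 * nn t)) p_infty (0 + sqrt (0 * 0 + 4 * exp (l + 0)))).
  { apply is_lim_plus'; auto. }
  set (n0 := (0 + sqrt (0 * 0 + 4 * exp (l + 0))) * / 2).
  assert (L2 : is_lim N2 p_infty n0).
  { apply (is_lim_ext (fun t => (ww t + sqrt (ww t * ww t + 4 * nn t)) * / 2)).
    - intro t. unfold ww, nn.
      replace ((N2 t - N3 t) * (N2 t - N3 t) + 4 * (N2 t * N3 t)) with ((N2 t + N3 t) * (N2 t + N3 t)) by ring.
      pose proof (P2 t); pose proof (P3 t).
      rewrite sqrt_square; [field | lra].
    - pose proof (is_lim_scal_r _ (/2) p_infty _ Hnum) as HH. simpl in HH. exact HH. }
  assert (L3 : is_lim N3 p_infty n0).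
  { apply (is_lim_ext (fun t => N2 t - ww t)). { intros; unfold ww; ring. }
    replace n0 with (n0 - 0) by ring. apply is_lim_minus'; auto. }
  exists n0. split; [|auto].
  unfold n0. apply Rmult_lt_0_compat; [|lra]. rewrite Rplus_0_l. apply sqrt_lt_R0.
  pose proof (exp_pos (l + 0)). lra.
Qed.

End WH.

Theorem mainTheorem9 (N1 N2 N3 Sp Sm : R -> R) :
  WH_solution N1 N2 N3 Sp Sm ->
  WH_constraint N1 N2 N3 Sp Sm ->
  (forall t, N1 t = 0) ->
  (forall t, 0 < N2 t) ->
  (forall t, 0 < N3 t) ->
  (exists t0, Sm t0 ^ 2 + (N2 t0 - N3 t0) ^ 2 > 0) ->
  exists n0 : R, 0 < n0 /\
    is_lim N2 p_infty n0 /\ is_lim N3 p_infty n0.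
Proof.
  intros Hsol Hcon HN1 P2 P3 [t0 Ht0].
  assert (E : forall t, Sp t ^ 2 + Sm t ^ 2 = 1 - 3/4 * (N2 t - N3 t)^2).
  { intro t. pose proof (Hcon t) as C. rewrite HN1 in C. lra. }
  assert (Hq : forall t, WH_q (Sp t) (Sm t) = 2 - 3/2 * (N2 t - N3 t)^2).
  { intro t. unfold WH_q. rewrite E. lra. }
  apply (sec_main N2 N3 Sp Sm) with (t0 := t0); auto.
  - intro t. destruct (Hsol t) as [_ [H _]]. rewrite Hq in H.
    assert (Ev : (((2 * (1 + Sp t) - 3 / 2 * (N2 t - N3 t) ^ 2 + 2 * sqrt 3 * Sm t) * N2 t) : R) = (2 - 3 / 2 * (N2 t - N3 t) ^ 2 + 2 * Sp t + 2 * sqrt 3 * Sm t) * N2 t) by ring. rewrite Ev. exact H.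
  - intro t. destruct (Hsol t) as [_ [_ [H _]]]. rewrite Hq in H.
    assert (Ev : (((2 * (1 + Sp t) - 3 / 2 * (N2 t - N3 t) ^ 2 - 2 * sqrt 3 * Sm t) * N3 t) : R) = (2 - 3 / 2 * (N2 t - N3 t) ^ 2 + 2 * Sp t - 2 * sqrt 3 * Sm t) * N3 t) by ring. rewrite Ev. exact H.
  - intro t. destruct (Hsol t) as [_ [_ [_ [H _]]]]. rewrite Hq in H. unfold WH_Splus in H. rewrite HN1 in H.
    assert (Ev : ((-(3/2)*(N2 t - N3 t)^2*(1+Sp t)) : R) = - (2 - (2 - 3 / 2 * (N2 t - N3 t) ^ 2)) * Sp t - 3 * (/ 2 * ((N2 t - N3 t) ^ 2 - 0 * (2 * 0 - N2 t - N3 t)))) by field. rewrite Ev. exact H.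
  - intro t. destruct (Hsol t) as [_ [_ [_ [_ H]]]]. rewrite Hq in H. unfold WH_Sminus in H. rewrite HN1 in H.
    assert (Ev : ((-(3/2)*(N2 t - N3 t)^2*Sm t - 3*sqrt 3/2*(N2 t - N3 t)*(N2 t + N3 t)) : R) = - (2 - (2 - 3 / 2 * (N2 t - N3 t) ^ 2)) * Sm t - 3 * (sqrt 3 / 2 * (N3 t - N2 t) * (0 - N2 t - N3 t))) by field. rewrite Ev. exact H.
  - intro t. pose proof (E t). nra.
Qed.
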